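(* Let $N\ge1$, $V=\{1,\dots,N\}$, $A$ an $N\times N$ row-stochastic matrix, and $\sigma_1,\sigma_2,\dots$ random variables with values in $2^V$. Consider $x(k+1)=A_{\sigma_k}x(k)$, $k\ge1$, with deterministic $x(1)\in\mathbb R^N$. Suppose: (a) $\mathcal G(A)$ is rooted and some root $r\in\mathbbm r(A)$ has a self-loop, i.e. $a_{rr}>0$. (b) There exists $\alpha>0$ such that whenever $\mathbb P(\sigma_k\mid\sigma_{k-1},\dots,\sigma_1)\neq0$, it is $\ge\alpha$. (c) There exists $q>0$ such that for every $k\ge1$ and every given value of $(\sigma_{k-1},\dots,\sigma_1)$, $\bigcup_{w=0}^{q-1}\bigcup_{\sigma\in\mathscr I_{\sigma_{(k-1):1}}(w)}\sigma=V$, where $\mathscr I_{\sigma_{(k-1):1}}(w)=\{\sigma:\mathbb P(\sigma_{k+w}=\sigma\mid\sigma_{k-1},\dots,\sigma_1)\neq0\}$. Then the iteration reaches consensus almost surely.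
   Context: $\mathcal G(A)$ is the directed graph on $V$ with an edge $(j,i)$ iff $a_{ij}>0$; it is rooted if some node $r$ has a directed path to every other node, and $\mathbbm r(A)$ is the set of such roots. For $\sigma\subseteq V$, $A_\sigma$ is the matrix whose $j$-th row equals the $j$-th row of $A$ if $j\in\sigma$ and $e_j^T$ otherwise. For $k=1$ conditional probabilities given the empty past are unconditional. The iteration reaches consensus almost surely if for every $\varepsilon>0$ and every $x(1)$, $\lim_{k\to\infty}\mathbb P\big(\sum_{j=1}^N (x_j(k)-\frac1N\sum_{i=1}^N x_i(k))^2\ge\varepsilon\big)=0$. *)

(* Defs.v *)
From HB Require Import structures.
From mathcomp Require Import all_boot all_order all_algebra.
From mathcomp Require Import all_classical all_reals all_analysis.
Set Implicit Arguments. Unset Strict Implicit. Unset Printing Implicit Defensive.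
Import Order.TTheory GRing.Theory Num.Theory.
Local Open Scope classical_set_scope.
Local Open Scope ring_scope.

Definition row_stochastic (R : realType) (N : nat) (A : 'M[R]_N) : Prop :=
  (forall i j, 0 <= A i j) /\ (forall i, \sum_(j < N) A i j = 1).

Definition graph_rel (R : realType) (N : nat) (A : 'M[R]_N) : rel 'I_N :=
  fun j i => 0 < A i j.

Definition is_root (R : realType) (N : nat) (A : 'M[R]_N) (r : 'I_N) : Prop :=
  forall i, connect (graph_rel A) r i.

Definition rooted (R : realType) (N : nat) (A : 'M[R]_N) : Prop :=
  exists r, is_root A r.

Definition Asub (R : realType) (N : nat) (A : 'M[R]_N) (s : {set 'I_N}) : 'M[R]_N :=
  \matrix_(j, l) (if j \in s then A j l else (j == l)%:R).

(* traj A sig x1 m w = x(m+1) at outcome w:  x(1) = x1, x(k+1) = A_{sig k} x(k) *)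
Fixpoint traj (R : realType) (N : nat) (A : 'M[R]_N) (T : Type)
  (sig : nat -> T -> {set 'I_N}) (x1 : 'cV[R]_N) (m : nat) (w : T) : 'cV[R]_N :=
  match m with
  | 0 => x1
  | m'.+1 => Asub A (sig m w) *m traj A sig x1 m' w
  end.

Definition disagreement (R : realType) (N : nat) (x : 'cV[R]_N) : R :=
  \sum_(j < N) (x j 0 - N%:R^-1 * \sum_(i < N) x i 0) ^+ 2.

(* event {sig_i = h i for 1 <= i < k}, i.e. given value h of (sig_{k-1},...,sig_1) *)
Definition hist_event (T : Type) (N : nat) (sig : nat -> T -> {set 'I_N})
  (k : nat) (h : nat -> {set 'I_N}) : set T :=
  [set w | forall i, (0 < i < k)%N -> sig i w = h i].

Definition cprob (d : measure_display) (T : measurableType d) (R : realType)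
  (P : probability T R) (E B : set T) : R :=
  fine (P (E `&` B)) / fine (P B).

(* Main.v *)
Require Import Defs.
From HB Require Import structures.
From mathcomp Require Import all_boot all_order all_algebra.
From mathcomp Require Import all_classical all_reals all_analysis.
From mathcomp Require Import ring lra.
Import Order.TTheory GRing.Theory Num.Theory.
Local Open Scope classical_set_scope.
Local Open Scope ring_scope.
Set Implicit Arguments. Unset Strict Implicit. Unset Printing Implicit Defensive.
Definition covered (N : nat) B k (g : nat -> {set 'I_N}) :=
  forall v : 'I_N, exists2 t, (t < B)%N & v \in g (k + t)%N.

Section Prob.
Context (R : realType) (d : measure_display) (T : measurableType d)
  (P : probability T R).

Definition pr (E : set T) : R := fine (P E).

Lemma prE (E : set T) : measurable E -> P E = (pr E)%:E.
Proof. by move=> mE; rewrite /pr fineK // fin_num_measure. Qed.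

Lemma pr_ge0 (E : set T) : measurable E -> 0 <= pr E.
Proof. by move=> mE; rewrite -lee_fin -prE. Qed.

Lemma pr_le1 (E : set T) : measurable E -> pr E <= 1.
Proof. by move=> mE; rewrite -lee_fin -prE // probability_le1. Qed.

Lemma pr_le (E F : set T) : measurable E -> measurable F -> E `<=` F ->
  pr E <= pr F.
Proof.
move=> mE mF EF; rewrite -lee_fin -!prE //; apply: le_measure; rewrite ?inE //.
Qed.

Lemma pr_setT : pr setT = 1.
Proof. by rewrite /pr probability_setT. Qed.

Lemma pr_set0 : pr set0 = 0.
Proof. by rewrite /pr measure0. Qed.

Lemma pr_U (E F : set T) : measurable E -> measurable F -> E `&` F = set0 ->
  pr (E `|` F) = pr E + pr F.
Proof.
move=> mE mF EF.
have mU : measurable (E `|` F) by apply: measurableU.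
have h : P (E `|` F) = (P E + P F)%E := measureU P mE mF EF.
by move: h; rewrite !prE // -EFinD; case.
Qed.

Lemma P_neq0 (E : set T) : measurable E -> (P E != 0%E) = (pr E != 0).
Proof. by move=> mE; rewrite prE // eqe. Qed.

Lemma bigsetU_ex (n : nat) (G : 'I_n -> set T) w :
  (\big[setU/set0]_(j < n) G j) w <-> exists j, G j w.
Proof.
split.
  elim/big_ind: _ => //; first by move=> X Y hX hY [/hX|/hY].
  by move=> j _ Gw; exists j.
by move=> [j Gj]; rewrite (bigD1 j) //=; left.
Qed.

Lemma pr_part (I : finType) (Z : I -> set T) (Y : set T) :
  (forall i, measurable (Y `&` Z i)) ->
  (forall i j, i != j -> Z i `&` Z j = set0) ->
  (forall w, exists i, Z i w) ->
  measurable Y /\ pr Y = \sum_(i : I) pr (Y `&` Z i).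
Proof.
move=> mYZ dZ cZ.
have YE : Y = \big[setU/set0]_(j < #|I|) (Y `&` Z (enum_val j)).
  apply/seteqP; split => [w Yw|w]; last by move/bigsetU_ex => [j []].
  apply/bigsetU_ex; have [i Zi] := cZ w.
  by exists (enum_rank i); rewrite enum_rankK.
have mY : measurable Y by rewrite YE; apply: bigsetU_measurable.
split => //.
have h : P (\big[setU/set0]_(j < #|I| | predT j) (Y `&` Z (enum_val j))) =
  (\sum_(j < #|I| | predT j) P (Y `&` Z (enum_val j)))%E.
  apply: measure_bigsetU_ord; first by [].
  move=> i j _ _ [w [[_ Zi] [_ Zj]]].
  case: (eqVneq (enum_val i) (enum_val j)) => [/enum_val_inj //|/dZ ij].
  have h : (Z (enum_val i) `&` Z (enum_val j)) w by split.
  by move: h; rewrite ij.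
rewrite !big_mkcond /= -YE in h.
apply: EFin_inj; rewrite -prE // h.
rewrite (big_enum_val (fun i => pr (Y `&` Z i))) /=.
rewrite -sumEFin; apply: eq_bigr => j _; rewrite prE //.
Qed.

End Prob.
Section Det.
Context (R : realType) (N : nat) (A : 'M[R]_N).

Fixpoint run (g : nat -> {set 'I_N}) (k n : nat) (x : 'cV[R]_N) : 'cV[R]_N :=
  match n with
  | 0 => x
  | n'.+1 => Asub A (g (k + n')%N) *m run g k n' x
  end.

Definition bounded (x : 'cV[R]_N) m D := forall i, m <= x i 0 <= m + D.

Definition Good g k n c := forall x m D, bounded x m D ->
  exists m', bounded (run g k n x) m' (c * D).

Lemma traj_run (T : Type) (sig : nat -> T -> {set 'I_N}) x1 n w :
  traj A sig x1 n w = run (fun i => sig i w) 1 n x1.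
Proof. by elim: n => //= n ->; rewrite add1n. Qed.

Lemma run_add g k n1 n2 x :
  run g k (n1 + n2) x = run g (k + n1) n2 (run g k n1 x).
Proof. by elim: n2 => [|n2 IH]; rewrite ?addn0 // addnS /= IH addnA. Qed.

Lemma run_agree g g' k n x : (forall i, (k <= i < k + n)%N -> g i = g' i) ->
  run g k n x = run g' k n x.
Proof.
elim: n => //= n IH H; rewrite IH; last first.
  by move=> i /andP[ki ik]; apply: H; rewrite ki (leq_trans ik) // leq_add2l.
by rewrite H // leq_addr /= ltn_add2l.
Qed.

Lemma Asub_mulE s (y : 'cV[R]_N) i :
  (Asub A s *m y) i 0 = if i \in s then \sum_l A i l * y l 0 else y i 0.
Proof.
rewrite mxE; case: ifP => iS.
  by apply: eq_bigr => l _; rewrite mxE iS.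
rewrite (bigD1 i) //= !mxE iS eqxx mul1r big1 ?addr0 // => l li.
by rewrite mxE iS eq_sym (negbTE li) mul0r.
Qed.

Context (A0 : forall i j, 0 <= A i j) (A1 : forall i, \sum_(j < N) A i j = 1).

Lemma conv_bound (y : 'cV[R]_N) m D i : bounded y m D ->
  m <= \sum_l A i l * y l 0 <= m + D.
Proof.
move=> hy; apply/andP; split.
  rewrite -[m]mul1r -(A1 i) mulr_suml; apply: ler_sum => l _.
  by apply: ler_wpM2l => //; case/andP: (hy l).
rewrite -[m + D]mul1r -(A1 i) mulr_suml; apply: ler_sum => l _.
by apply: ler_wpM2l => //; case/andP: (hy l).
Qed.

Lemma bounded_step s y m D : bounded y m D -> bounded (Asub A s *m y) m D.
Proof.
move=> hy i; rewrite Asub_mulE; case: ifP => _; [exact: conv_bound | exact: hy].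
Qed.

Lemma run_bounded g k n x m D : bounded x m D -> bounded (run g k n x) m D.
Proof. by move=> hx; elim: n => //= n IH; apply: bounded_step. Qed.

Lemma Good_comp g k n1 n2 c1 c2 : Good g k n1 c1 -> Good g (k + n1) n2 c2 ->
  Good g k (n1 + n2) (c2 * c1).
Proof.
move=> G1 G2 x m D hx; have [m1 h1] := G1 x m D hx.
have [m2 h2] := G2 _ _ _ h1; exists m2; by rewrite run_add -mulrA.
Qed.

Lemma Good_local g g' k n c : (forall i, (k <= i < k + n)%N -> g' i = g i) ->
  Good g k n c -> Good g' k n c.
Proof.
move=> a G x m D hx; have [m' h] := G x m D hx; exists m'.
by rewrite (@run_agree g' g) // => i /a.
Qed.

Lemma disagreement_bound (x : 'cV[R]_N) m D : (0 < N)%N -> bounded x m D ->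
  disagreement x <= N%:R * D ^+ 2.
Proof.
move=> N0 hx; rewrite /disagreement.
set mu := (N%:R^-1 * _).
have Npos : 0 < N%:R :> R by rewrite ltr0n.
have sc (c : R) : \sum_(i < N) c = N%:R * c by rewrite sumr_const card_ord mulr_natl.
have hmu : m <= mu <= m + D.
  have Nz : N%:R != 0 :> R by rewrite lt0r_neq0.
  have NV (c : R) : N%:R^-1 * (N%:R * c) = c by rewrite mulrA mulVf ?mul1r.
  rewrite /mu; apply/andP; split.
    rewrite -{1}(NV m) ler_pM2l ?invr_gt0 // -sc; apply: ler_sum => i _.
    by case/andP: (hx i).
  rewrite -{1}(NV (m + D)) ler_pM2l ?invr_gt0 // -sc; apply: ler_sum => i _.
  by case/andP: (hx i).
rewrite -sc; apply: ler_sum => j _.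
case/andP: (hx j) => h1 h2; case/andP: hmu => h3 h4.
have p1 : 0 <= D - (x j 0 - mu) by lra.
have p2 : 0 <= D + (x j 0 - mu) by lra.
have := mulr_ge0 p1 p2; rewrite !expr2; nra.
Qed.


Definition tied (y : 'cV[R]_N) m D rho i (gam : R) :=
  (1 - gam) * m + gam * rho <= y i 0 <= (1 - gam) * (m + D) + gam * rho.

Lemma tied_mono y m D rho i g1 g2 : m <= rho <= m + D -> 0 <= g2 <= g1 ->
  tied y m D rho i g1 -> tied y m D rho i g2.
Proof.
move=> /andP[r1 r2] /andP[h1 h2] /andP[t1 t2].
have e1 : 0 <= g1 - g2 by rewrite subr_ge0.
have e2 : 0 <= rho - m by rewrite subr_ge0.
have e3 : 0 <= m + D - rho by rewrite subr_ge0.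
have q1 := mulr_ge0 e1 e2.
have q2 := mulr_ge0 e1 e3.
apply/andP; split; nra.
Qed.

Lemma tied_step y m D rho p i (s : {set 'I_N}) a gam : bounded y m D -> m <= rho <= m + D ->
  0 <= gam -> tied y m D rho p gam -> 0 <= a -> a <= A i p -> i \in s ->
  tied (Asub A s *m y) m D rho i (a * gam).
Proof.
move=> hy /andP[r1 r2] g0 /andP[t1 t2] a0 aA iS.
rewrite /tied Asub_mulE iS (bigD1 p) //=.
have Ar : \sum_(l < N | l != p) A i l = 1 - A i p.
  by have := A1 i; rewrite (bigD1 p) //=; lra.
have s1 : (1 - A i p) * m <= \sum_(l < N | l != p) A i l * y l 0.
  rewrite -Ar mulr_suml; apply: ler_sum => l _; apply: ler_wpM2l => //.
  by case/andP: (hy l).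
have s2 : \sum_(l < N | l != p) A i l * y l 0 <= (1 - A i p) * (m + D).
  rewrite -Ar mulr_suml; apply: ler_sum => l _; apply: ler_wpM2l => //.
  by case/andP: (hy l).
have u1 := ler_wpM2l (A0 i p) t1.
have u2 := ler_wpM2l (A0 i p) t2.
have e1 : 0 <= A i p - a by rewrite subr_ge0.
have e2 : 0 <= rho - m by rewrite subr_ge0.
have e3 : 0 <= m + D - rho by rewrite subr_ge0.
have v1 := mulr_ge0 e1 (mulr_ge0 g0 e2).
have v2 := mulr_ge0 e1 (mulr_ge0 g0 e3).
apply/andP; split; nra.
Qed.

Lemma tied_stay y m D rho i (s : {set 'I_N}) gam : i \notin s ->
  tied y m D rho i gam -> tied (Asub A s *m y) m D rho i gam.
Proof. by move=> iS; rewrite /tied Asub_mulE (negbTE iS). Qed.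

Section Window.
Context (a : R) (a0 : 0 < a) (a1 : a <= 1)
  (amin : forall i j, 0 < A i j -> a <= A i j)
  (r : 'I_N) (rr : 0 < A r r) (rroot : forall i, connect (graph_rel A) r i).
Context (g : nat -> {set 'I_N}) (k : nat) (x : 'cV[R]_N) (m D : R)
  (hx : bounded x m D).

Let y t := run g k t x.
Let rho := x r 0.
Let hrho : m <= rho <= m + D. Proof. exact: hx. Qed.
Let hy t : bounded (y t) m D. Proof. exact: run_bounded. Qed.

Lemma step_or_stay t p i : tied (y t) m D rho p (a ^+ t) -> 0 < A i p ->
  (i \in g (k + t)%N \/ tied (y t) m D rho i (a ^+ t)) ->
  tied (y t.+1) m D rho i (a ^+ t.+1).
Proof.
move=> tp Aip; case: (boolP (i \in g (k + t)%N)) => [iS _|iS [//|ti]].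
  rewrite exprS; apply: (tied_step (hy t) hrho _ tp (ltW a0) (amin Aip) iS).
  exact: exprn_ge0 (ltW a0).
apply: (tied_mono hrho _ (tied_stay iS ti)).
have h := exprn_ge0 t (ltW a0); rewrite exprS; apply/andP; split.
  by rewrite mulr_ge0 // ltW.
by rewrite -[leRHS]mul1r ler_wpM2r.
Qed.

Lemma root_tied t : tied (y t) m D rho r (a ^+ t).
Proof.
elim: t => [|t IH].
  by rewrite /tied expr0 /y /= subrr !mul0r !add0r mul1r; apply/andP; split.
by apply: (step_or_stay IH rr); right.
Qed.

Lemma prop_tied e p i t0 : (forall t, (e <= t)%N -> tied (y t) m D rho p (a ^+ t)) ->
  0 < A i p -> (e <= t0)%N -> i \in g (k + t0)%N ->
  forall t, (t0 < t)%N -> tied (y t) m D rho i (a ^+ t).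
Proof.
move=> hp Aip et0 ig; elim=> // t IH; rewrite ltnS leq_eqVlt => /orP[/eqP<-|t0t].
  by apply: step_or_stay Aip _; [apply: hp | left].
apply: step_or_stay Aip _; first by apply: hp; rewrite (leq_trans et0) // ltnW.
by right; apply: IH.
Qed.

Context (B : nat) (cov : forall j, (j < N)%N -> covered B (k + j * B) g).

Lemma path_tied (p : seq 'I_N) : path (graph_rel A) r p -> (size p <= N)%N ->
  forall t, (size p * B <= t)%N -> tied (y t) m D rho (last r p) (a ^+ t).
Proof.
elim/last_ind: p => [|p z IH]; first by move=> _ _ t _; apply: root_tied.
rewrite rcons_path size_rcons last_rcons => /andP[pp ez] sz.
have hp := IH pp (ltnW sz).
have [t' t'B zt'] := cov sz z.
rewrite -addnA in zt'.
move=> t ht; apply: (prop_tied hp ez (leq_addr _ _) zt').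
by apply: leq_trans ht; rewrite mulSnr ltn_add2l.
Qed.

Lemma all_tied i : tied (y (N * B)) m D rho i (a ^+ (N * B)).
Proof.
have /connectP [p pp ->] := rroot i.
case: (shortenP pp) => p' pp' up _.
have sz : (size p' < N)%N.
  have := max_card (mem (r :: p')); rewrite card_ord (card_uniqP up).
  by [].
by apply: path_tied => //; [exact: ltnW | rewrite leq_mul2r ltnW ?orbT].
Qed.

Lemma window_bound : exists m', bounded (y (N * B)) m' ((1 - a ^+ (N * B)) * D).
Proof.
exists ((1 - a ^+ (N * B)) * m + a ^+ (N * B) * rho) => i.
have /andP[h1 h2] := all_tied i; apply/andP; split => //.
apply: le_trans h2 _; rewrite le_eqVlt; apply/orP; left; apply/eqP; ring.
Qed.

End Window.

Lemma window a r g k B : 0 < a -> a <= 1 -> (forall i j, 0 < A i j -> a <= A i j) ->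
  0 < A r r -> (forall i, connect (graph_rel A) r i) ->
  (forall j, (j < N)%N -> covered B (k + j * B) g) ->
  Good g k (N * B) (1 - a ^+ (N * B)).
Proof.
move=> a0 a1 amin rr rroot cov x m D hx.
exact: (window_bound a0 a1 amin rr rroot hx cov).
Qed.


End Det.
Section Hist.
Context (R : realType) (N : nat) (d : measure_display) (T : measurableType d)
  (P : probability T R) (sig : nat -> T -> {set 'I_N})
  (msig : forall k s, measurable [set w | sig k w = s]).

Local Notation pr := (pr P).
Local Notation E := (hist_event sig).

Definition upd (g : nat -> {set 'I_N}) k s : nat -> {set 'I_N} :=
  fun i => if i == k then s else g i.

Definition agree (g g' : nat -> {set 'I_N}) m := forall i, (i < m)%N -> g' i = g i.

Lemma E0 g : E 0 g = setT.
Proof. by apply/seteqP; split => // w _ i /andP[/ltn_trans h /h]. Qed.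

Lemma E1 g : E 1 g = setT.
Proof. by apply/seteqP; split => // w _ i /andP[/leq_trans h /h]; rewrite ltnn. Qed.

Lemma ES k g : (0 < k)%N -> E k.+1 g = E k g `&` [set w | sig k w = g k].
Proof.
move=> k0; apply/seteqP; split => w.
  move=> h; split; last by apply: h; rewrite k0 /=.
  by move=> i /andP[i0 ik]; apply: h; rewrite i0 ltnS ltnW.
move=> [h hk] i /andP[i0]; rewrite ltnS leq_eqVlt => /orP[/eqP -> //|ik].
by apply: h; rewrite i0.
Qed.

Lemma E_meas k g : measurable (E k g).
Proof.
elim: k => [|k IH]; first by rewrite E0.
case: k IH => [|k] IH; first by rewrite E1.
by rewrite ES //; apply: measurableI.
Qed.

Lemma E_agree k g g' : agree g g' k -> E k g' = E k g.
Proof.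
move=> ag; apply/seteqP; split => w h i /andP[i0 ik].
  by rewrite -ag //; apply: h; rewrite i0.
by rewrite ag //; apply: h; rewrite i0.
Qed.

Lemma E_upd k g s : (0 < k)%N ->
  E k.+1 (upd g k s) = E k g `&` [set w | sig k w = s].
Proof.
move=> k0; rewrite ES // /upd eqxx; congr (_ `&` _).
apply: E_agree => i ik; by rewrite (ltn_eqF ik).
Qed.

Lemma agree_upd g k s : agree g (upd g k s) k.
Proof. by move=> i ik; rewrite /upd (ltn_eqF ik). Qed.

Lemma agree_trans g1 g2 g3 m1 m2 : agree g1 g2 m1 -> agree g2 g3 m2 ->
  (m1 <= m2)%N -> agree g1 g3 m1.
Proof. by move=> a b m12 i im; rewrite b ?a // (leq_trans im). Qed.

Lemma agree_le g g' m m' : agree g g' m -> (m' <= m)%N -> agree g g' m'.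
Proof. by move=> a mm i im; rewrite a // (leq_trans im). Qed.

Lemma step_exists k g X : (0 < k)%N -> measurable X ->
  0 < pr (X `&` E k g) -> exists s, 0 < pr (X `&` E k.+1 (upd g k s)).
Proof.
move=> k0 mX p0.
have eq s : X `&` E k g `&` [set w | sig k w = s] = X `&` E k.+1 (upd g k s).
  by rewrite E_upd // setIA.
have [] := @pr_part _ _ _ P {set 'I_N} (fun s => [set w | sig k w = s]) (X `&` E k g).
- by move=> s; rewrite eq; apply: measurableI => //; apply: E_meas.
- move=> s s' ss'; apply/seteqP; split => // w [/= -> h]; by move: ss'; rewrite h eqxx.
- by move=> w; exists (sig k w).
move=> _ hs.
case: (pselect (exists s, 0 < pr (X `&` E k.+1 (upd g k s)))) => // /forallNP H.
move: p0; rewrite hs big1 ?ltxx // => s _.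
apply/eqP; rewrite eq_le pr_ge0 ?andbT; last by rewrite eq; apply: measurableI => //; apply: E_meas.
by rewrite leNgt; apply/negP; rewrite eq; apply: H.
Qed.



Definition det n (S : set T) := forall w w',
  (forall i, (0 < i <= n)%N -> sig i w = sig i w') -> S w -> S w'.

Definition Zf n (f : {ffun 'I_n.+1 -> {set 'I_N}}) : set T :=
  if f ord0 == finset.set0 then E n.+1 (fun i => f (inord i)) else set0.

Lemma Zf_meas n f : measurable (@Zf n f).
Proof. by rewrite /Zf; case: ifP => _ //; apply: E_meas. Qed.

Lemma Zf_disj n (f f' : {ffun 'I_n.+1 -> {set 'I_N}}) : f != f' -> Zf f `&` Zf f' = set0.
Proof.
move=> ff; rewrite /Zf; case: ifP => [/eqP f0|_]; last by rewrite set0I.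
case: ifP => [/eqP f0'|_]; last by rewrite setI0.
apply/seteqP; split => // w [h h']; move/negP: ff; apply; apply/eqP/ffunP => i.
case: (eqVneq i ord0) => [->|i0]; first by rewrite f0 f0'.
have hi : (0 < i < n.+1)%N by rewrite lt0n ltn_ord andbT; apply: contra i0 => /eqP i0; apply/eqP/val_inj.
by have := h _ hi; have := h' _ hi; rewrite inord_val => <- <-.
Qed.

Lemma Zf_cover n w : exists f, @Zf n f w.
Proof.
exists [ffun i : 'I_n.+1 => if val i == 0%N then finset.set0 else sig i w].
rewrite /Zf ffunE eqxx => j /andP[j0 jn].
by rewrite ffunE /= inordK ?(negbTE (lt0n_neq0 j0)).
Qed.

Lemma Zf_dich n S f : det n S -> (@Zf n f `<=` S) \/ (S `&` Zf f = set0).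
Proof.
move=> dS; case: (pselect (exists w, S w /\ Zf f w)) => [[w [Sw Zw]]|H].
  left => w' Zw'; apply: (dS w w') Sw => i /andP[i0 iN].
  move: Zw Zw'; rewrite /Zf; case: ifP => _ // h h'.
  have hi : (0 < i < n.+1)%N by rewrite i0 ltnS.
  by rewrite h // h'.
by right; apply/seteqP; split => // w' [Sw' Zw']; apply: H; exists w'.
Qed.

Lemma Zf_disj' n : forall f f' : {ffun 'I_n.+1 -> {set 'I_N}}, f != f' ->
  Zf f `&` Zf f' = set0.
Proof. by move=> f f'; apply: Zf_disj. Qed.

Lemma Zf_cover' n : forall w, exists f : {ffun 'I_n.+1 -> {set 'I_N}}, Zf f w.
Proof. by move=> w; apply: Zf_cover. Qed.

Lemma det_meas n S : det n S -> measurable S.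
Proof.
move=> dS.
have hm : forall f, measurable (S `&` @Zf n f).
  move=> f; case: (Zf_dich f dS) => [sub|->] //.
  by rewrite setIidr //; apply: Zf_meas.
by have [] := pr_part P hm (@Zf_disj' n) (@Zf_cover' n).
Qed.

Lemma det_bound n S X c : det n S -> measurable X -> 0 <= c ->
  (forall g, pr (E n.+1 g `&` X) <= c * pr (E n.+1 g)) ->
  pr (S `&` X) <= c * pr S.
Proof.
move=> dS mX c0 H; have mS := det_meas dS.
have hm : forall f, measurable (S `&` @Zf n f).
  move=> f; case: (Zf_dich f dS) => [sub|->] //.
  by rewrite setIidr //; apply: Zf_meas.
have hm' : forall f, measurable (S `&` X `&` @Zf n f).
  move=> f; case: (Zf_dich f dS) => [sub|emp].
    have -> : S `&` X `&` Zf f = Zf f `&` X.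
      by apply/seteqP; split => w; [move=> [[]]|move=> [Zw Xw]; split => //; split => //; apply: sub].
    by apply: measurableI => //; apply: Zf_meas.
  have -> : S `&` X `&` Zf f = set0.
    by apply/seteqP; split => // w [[Sw _] Zw]; have : (S `&` Zf f) w by []; rewrite emp.
  by [].
have [_ ->] := pr_part P hm' (@Zf_disj' n) (@Zf_cover' n).
have [_ ->] := pr_part P hm (@Zf_disj' n) (@Zf_cover' n).
rewrite mulr_sumr; apply: ler_sum => f _.
case: (Zf_dich f dS) => [sub|emp].
  have e1 : S `&` X `&` Zf f = Zf f `&` X.
    by apply/seteqP; split => w; [move=> [[]]|move=> [Zw Xw]; split => //; split => //; apply: sub].
  rewrite e1 (setIidr sub).
  rewrite /Zf; case: ifP => _; [exact: H | by rewrite set0I pr_set0 mulr0].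
have e1 : S `&` X `&` Zf f = set0.
  by apply/seteqP; split => // w [[Sw _] Zw]; have : (S `&` Zf f) w by []; rewrite emp.
by rewrite e1 emp pr_set0 mulr0.
Qed.

Context (alpha : R) (alpha_gt0 : 0 < alpha).
Let alpha0 : 0 <= alpha. Proof. exact: ltW. Qed.
Hypothesis hb : forall k g s, (0 < k)%N -> 0 < pr (E k g) ->
  0 < pr (E k.+1 (upd g k s)) -> alpha * pr (E k g) <= pr (E k.+1 (upd g k s)).

Lemma walk n k g X : (0 < k)%N -> measurable X -> 0 < pr (X `&` E k g) ->
  exists g', [/\ agree g g' k, 0 < pr (X `&` E (k + n) g') &
     alpha ^+ n * pr (E k g) <= pr (E (k + n) g')].
Proof.
move=> k0 mX p0; elim: n => [|n [g' [ag p1 p2]]].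
  by exists g; rewrite addn0 expr0 mul1r; split.
have [s ps] : exists s, 0 < pr (X `&` E (k + n).+1 (upd g' (k + n) s)).
  by apply: step_exists => //; rewrite addn_gt0 k0.
exists (upd g' (k + n) s); rewrite addnS; split => //.
- by apply: (agree_trans ag (@agree_upd g' (k + n) s)); rewrite leq_addr.
- have pE : 0 < pr (E (k + n).+1 (upd g' (k + n) s)).
    apply: lt_le_trans ps _; apply: pr_le; [apply: measurableI => //; apply: E_meas | apply: E_meas | by move=> w []].
  have pE' : 0 < pr (E (k + n) g').
    apply: lt_le_trans p1 _; apply: pr_le; [apply: measurableI => //; apply: E_meas | apply: E_meas | by move=> w []].
  have kn0 : (0 < k + n)%N by rewrite addn_gt0 k0.
  apply: le_trans (hb kn0 pE' pE).
  by rewrite exprS -mulrA ler_wpM2l.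
Qed.


Definition Plan n (b : R) (Q : nat -> (nat -> {set 'I_N}) -> Prop) :=
  forall k g, (0 < k)%N -> 0 < pr (E k g) ->
    exists g', [/\ agree g g' k, b * pr (E k g) <= pr (E (k + n) g') & Q k g'].

Definition local n (Q : nat -> (nat -> {set 'I_N}) -> Prop) :=
  forall k g g', agree g g' (k + n) -> Q k g -> Q k g'.

Lemma plan_seq n1 n2 b1 b2 Q1 Q2 : 0 < b1 -> 0 <= b2 ->
  Plan n1 b1 Q1 -> Plan n2 b2 Q2 -> local n1 Q1 ->
  Plan (n1 + n2) (b2 * b1) (fun k g => Q1 k g /\ Q2 (k + n1)%N g).
Proof.
move=> b10 b20 P1 P2 l1 k g k0 p.
have [g1 [a1 i1 q1]] := P1 k g k0 p.
have k10 : (0 < k + n1)%N by rewrite addn_gt0 k0.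
have p1 : 0 < pr (E (k + n1) g1) by apply: lt_le_trans i1; rewrite mulr_gt0.
have [g2 [a2 i2 q2]] := P2 _ _ k10 p1.
exists g2; split.
- by apply: (agree_trans a1 a2); rewrite leq_addr.
- rewrite addnA; apply: le_trans i2; rewrite -mulrA; exact: ler_wpM2l.
- by split => //; apply: l1 q1.
Qed.

Lemma plan_weaken n b b' Q Q' : Plan n b Q -> b' = b ->
  (forall k g, Q k g -> Q' k g) -> Plan n b' Q'.
Proof.
move=> PQ -> QQ k g k0 p; have [g' [a i q']] := PQ k g k0 p.
by exists g'; split => //; apply: QQ.
Qed.

Context (q : nat).
Hypothesis hc : forall k g, (0 < k)%N -> 0 < pr (E k g) -> forall v : 'I_N,
  exists w, (w < q)%N /\ exists s : {set 'I_N}, v \in s /\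
    0 < pr ([set t | sig (k + w)%N t = s] `&` E k g).

Lemma phase v : Plan q (alpha ^+ q) (fun k g => exists2 t, (t < q)%N & v \in g (k + t)%N).
Proof.
move=> k g k0 p.
have [w [wq [s [vs ps]]]] := hc k0 p v.
set X := [set t | sig (k + w)%N t = s] in ps.
have mX : measurable X by apply: msig.
have [g1 [a1 p1 i1]] := walk w k0 mX ps.
set g2 := upd g1 (k + w) s.
have kw0 : (0 < k + w)%N by rewrite addn_gt0 k0.
have E2 : E (k + w).+1 g2 = E (k + w) g1 `&` X by rewrite E_upd.
have p1' : 0 < pr (E (k + w) g1).
  apply: lt_le_trans p1 _; apply: pr_le; [apply: measurableI => //; apply: E_meas | apply: E_meas | by move=> t []].
have p2 : 0 < pr (E (k + w).+1 g2) by rewrite E2 setIC.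
have i2 := hb kw0 p1' p2.
have k20 : (0 < (k + w).+1)%N by [].
have p2' : 0 < pr (setT `&` E (k + w).+1 g2) by rewrite setTI.
have [g3 [a3 p3 i3]] := walk (q - w.+1) k20 (@measurableT _ _) p2'.
have e : ((k + w).+1 + (q - w.+1) = k + q)%N.
  by rewrite -addnS -addnA subnKC.
rewrite e in i3.
exists g3; split.
- have a13 : agree g1 g3 (k + w) by apply: (agree_trans (@agree_upd g1 (k + w) s) a3).
  by apply: (agree_trans a1 a13); rewrite leq_addr.
- apply: le_trans i3.
  have -> : alpha ^+ q = alpha ^+ (q - w.+1) * (alpha * alpha ^+ w).
    by rewrite -exprS -exprD subnK.
  rewrite -!mulrA; apply: ler_wpM2l; first exact: exprn_ge0.
  apply: le_trans i2; apply: ler_wpM2l => //.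
- exists w => //; rewrite a3 //; by rewrite /g2 /upd eqxx.
Qed.

Lemma phase_local v : local q (fun k g => exists2 t, (t < q)%N & v \in g (k + t)%N).
Proof. by move=> k g g' a [t tq vg]; exists t => //; rewrite a // ltn_add2l. Qed.

Lemma round (l : seq 'I_N) : Plan (size l * q) (alpha ^+ (size l * q))
  (fun k g => forall v, v \in l -> exists2 t, (t < size l * q)%N & v \in g (k + t)%N).
Proof.
elim: l => [|v l IH].
  move=> k g k0 p; exists g; rewrite addn0 expr0 mul1r; split => //.
have := plan_seq (exprn_gt0 q alpha_gt0) (exprn_ge0 (size l * q) alpha0) (phase v) IH (@phase_local v).
move/plan_weaken; apply.
  by rewrite /= mulSn exprD mulrC.
move=> k g [[t tq vt] H] u; rewrite inE => /orP[/eqP ->|ul].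
  by exists t => //; rewrite /= mulSn (leq_trans tq) // leq_addr.
have [t' t'l ut'] := H u ul; exists (q + t')%N.
  by rewrite /= mulSn ltn_add2l.
by rewrite addnA.
Qed.


Lemma rounds Rn : Plan (Rn * (N * q)) (alpha ^+ (Rn * (N * q)))
  (fun k g => forall j, (j < Rn)%N -> covered (N * q) (k + j * (N * q)) g).
Proof.
pose B := (N * q)%N.
have rB : Plan B (alpha ^+ B) (fun k g => covered B k g).
  have := round (enum 'I_N); rewrite size_enum_ord => /plan_weaken; apply => //.
  by move=> k g H v; apply: H; rewrite mem_enum.
elim: Rn => [|Rn IH].
  move=> k g k0 p; exists g; rewrite mul0n addn0 expr0 mul1r; split => //.
have loc : local (Rn * B) (fun k g => forall j, (j < Rn)%N -> covered B (k + j * B) g).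
  move=> k g g' a H j jR v; have [t tB vt] := H j jR v; exists t => //.
  rewrite a // -addnA ltn_add2l (leq_trans (_ : _ < j * B + B)%N) ?ltn_add2l //.
  by rewrite -mulSnr leq_mul2r jR orbT.
have := plan_seq (exprn_gt0 (Rn * B) alpha_gt0) (exprn_ge0 B alpha0) IH rB loc.
rewrite mulSnr; move/plan_weaken; apply; first by rewrite exprD mulrC.
move=> k g [H1 H2] j; rewrite ltnS leq_eqVlt => /orP[/eqP ->|]; last exact: H1.
exact: H2.
Qed.


Context (A : 'M[R]_N) (A0 : forall i j, 0 <= A i j)
  (A1 : forall i, \sum_(j < N) A i j = 1)
  (a : R) (a0 : 0 < a) (a1 : a <= 1)
  (amin : forall i j, 0 < A i j -> a <= A i j)
  (r : 'I_N) (rr : 0 < A r r) (rroot : forall i, connect (graph_rel A) r i).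

Definition Lw := (N * (N * q))%N.
Definition cw := 1 - a ^+ Lw.
Definition bw := alpha ^+ Lw.

Lemma planW : Plan Lw bw (fun k g => Good A g k Lw cw).
Proof.
apply: (plan_weaken (rounds N)) => // k g H.
exact: (window A0 A1 a0 a1 amin rr rroot H).
Qed.

Lemma Good_loc n c : local n (fun k g => Good A g k n c).
Proof.
move=> k g g' ag; apply: Good_local => i /andP[_ ik]; exact: ag.
Qed.

Lemma planJ J : Plan (J * Lw) (bw ^+ J) (fun k g => Good A g k (J * Lw) (cw ^+ J)).
Proof.
elim: J => [|J IH].
  move=> k g k0 p; exists g; rewrite mul0n addn0 expr0 mul1r; split => //.
  by move=> x m D hx; exists m; rewrite mul1r.
have bw0 : 0 < bw ^+ J by rewrite exprn_gt0 // exprn_gt0.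
have bw1 : 0 <= bw by apply: ltW; apply: exprn_gt0.
have := plan_seq bw0 bw1 IH planW (@Good_loc _ _).
rewrite mulSnr; move/plan_weaken; apply; first by rewrite exprS.
move=> k g [G1 G2]; rewrite exprS; exact: Good_comp G1 G2.
Qed.


Hypothesis N0 : (0 < N)%N.
Hypothesis q0 : (0 < q)%N.

Lemma mainlem (x1 : 'cV[R]_N) (eps : R) : 0 < eps ->
  (fun K : nat => P [set w | eps <= disagreement (traj A sig x1 K.-1 w)]) @ \oo --> 0%E.
Proof.
move=> eps0.
pose S := \sum_(i < N) `|x1 i 0|.
have S0 : 0 <= S by apply: sumr_ge0 => i _.
pose D0 := S + S.
have hx1 : bounded x1 (- S) D0.
  move=> i; have : `|x1 i 0| <= S.
    by rewrite /S (bigD1 i) //= lerDl; apply: sumr_ge0 => j _.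
  rewrite ler_norml => /andP[h1 h2]; apply/andP; split; rewrite /D0; lra.
have Lw0 : (0 < Lw)%N by rewrite /Lw !muln_gt0 N0 q0.
have aL0 : 0 < a ^+ Lw := exprn_gt0 _ a0.
have aL1 : a ^+ Lw <= 1 := exprn_ile1 _ (ltW a0) a1.
have cw0 : 0 <= cw by rewrite /cw subr_ge0.
have cw1 : cw < 1 by rewrite /cw; lra.
pose K0 := N%:R * D0 ^+ 2 + 1.
have K00 : 0 < K0 by rewrite /K0; apply: ltr_wpDl => //; apply: mulr_ge0 => //; apply: sqr_ge0.
have [J0 hJ] : exists J, cw ^+ J < eps / K0.
  have := @cvg_expr R cw; rewrite ger0_norm // => /(_ cw1) /cvgrPdist_lt /(_ (eps / K0)).
  case; first by apply: divr_gt0.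
  move=> n0 _ Hn; exists n0; have := Hn n0 (leqnn _).
  by rewrite sub0r normrN ger0_norm //; apply: exprn_ge0.
pose J := J0.+1.
pose cJ := cw ^+ J.
have cJ0 : 0 <= cJ by apply: exprn_ge0.
have cJ1 : cJ <= 1 by apply: exprn_ile1 => //; apply: ltW.
have cJJ : cJ <= cw ^+ J0.
  by rewrite /cJ /J exprSr -[leRHS]mulr1 ler_wpM2l // ?exprn_ge0 // ltW.
have cJe : N%:R * (cJ * D0) ^+ 2 < eps.
  have u : cJ * K0 < eps by rewrite -ltr_pdivlMr //; apply: le_lt_trans hJ.
  have w0 : 0 <= N%:R * D0 ^+ 2 by apply: mulr_ge0 => //; apply: sqr_ge0.
  have v : N%:R * (cJ * D0) ^+ 2 <= cJ * (N%:R * D0 ^+ 2).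
    rewrite exprMn mulrCA; apply: ler_wpM2r => //.
    by rewrite expr2 -[leRHS]mulr1; apply: ler_wpM2l.
  apply: le_lt_trans v _; apply: le_lt_trans u; apply: ler_wpM2l => //.
  by rewrite /K0 lerDl.
pose L' := (J * Lw)%N.
have L'0 : (0 < L')%N by rewrite /L' muln_gt0 Lw0.
pose be := bw ^+ J.
have pJ : Plan L' be (fun k g => Good A g k L' cJ) := planJ J.
clearbody L'.
have be0 : 0 < be by rewrite /be /bw !exprn_gt0.
have be1 : be <= 1.
  have p1 : 0 < pr (E 1 (fun _ => finset.set0)) by rewrite E1 pr_setT ltr01.
  have [g' [_ h _]] := pJ 1%N _ (ltn0Sn 0) p1.
  rewrite E1 pr_setT mulr1 in h; apply: le_trans h _; apply: pr_le1; apply: E_meas.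
pose sigw w := fun i => sig i w.
pose Fail m := [set w | forall j, (j < m)%N -> ~ Good A (sigw w) (1 + j * L') L' cJ].
pose X m := [set w | ~ Good A (sigw w) (1 + m * L') L' cJ].
have loc j m w w' : (j < m)%N -> (forall i, (0 < i <= m * L')%N -> sig i w = sig i w') ->
    Good A (sigw w') (1 + j * L') L' cJ -> Good A (sigw w) (1 + j * L') L' cJ.
  move=> jm ag; apply: Good_local => i /andP[i1 i2]; apply: ag.
  rewrite (leq_trans _ i1) //=; rewrite -ltnS (leq_trans i2) //.
  by rewrite -addnA add1n ltnS -mulSnr leq_mul2r jm orbT.
have detF m : det (m * L') (Fail m).
  by move=> w w' ag Fw j jm G; apply: (Fw j jm); apply: (loc j m w w' jm ag).
have detX m : det (m.+1 * L') (X m).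
  by move=> w w' ag Xw G; apply: Xw; apply: (loc m m.+1 w w' (ltnSn m) ag).
have FS m : Fail m.+1 = Fail m `&` X m.
  apply/seteqP; split => w.
    by move=> h; split; [move=> j jm; apply: h; rewrite ltnS ltnW | apply: h].
  move=> [h1 h2] j; rewrite ltnS leq_eqVlt => /orP[/eqP ->|jm] //; exact: h1.
have Fbound m : pr (Fail m) <= (1 - be) ^+ m.
  elim: m => [|m IH]; first by rewrite expr0; apply: pr_le1; apply: (det_meas (detF 0%N)).
  rewrite FS.
  have mX : measurable (X m) by apply: (det_meas (detX m)).
  have hb1 : 0 <= 1 - be by rewrite subr_ge0.
  apply: le_trans (det_bound (detF m) mX hb1 _) _; last first.
    by rewrite exprS ler_wpM2l.
  move=> g; set k := (m * L').+1.
  have mE : measurable (E k g) by apply: E_meas.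
  have mEX : measurable (E k g `&` X m) by apply: measurableI.
  case: (ltrP 0 (pr (E k g))) => [p|p]; last first.
    have p0 : pr (E k g) = 0 by apply/eqP; rewrite eq_le p pr_ge0.
    by rewrite p0 mulr0 -p0; apply: pr_le => // w [].
  have [g' [ag ineq G]] := pJ k g (ltn0Sn _) p.
  set F := E (k + L') g' in ineq.
  have mF : measurable F by apply: E_meas.
  have FE : F `<=` E k g.
    move=> w Fw i /andP[i0 ik]; rewrite -ag //; apply: Fw.
    by rewrite i0 (leq_trans ik) // leq_addr.
  have FX : (E k g `&` X m) `&` F = set0.
    apply/seteqP; split => // w [[_ Xw] Fw]; apply: Xw.
    rewrite add1n; apply: Good_local G => i /andP[ki ik].
    apply: Fw; rewrite ik andbT; exact: leq_trans ki.
  have := pr_U P mEX mF FX.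
  have : pr ((E k g `&` X m) `|` F) <= pr (E k g).
    apply: pr_le => //; first by apply: measurableU.
    by move=> w [[]|/FE].
  lra.
pose SK K := [set w | eps <= disagreement (traj A sig x1 K.-1 w)].
have detS K : det K.-1 (SK K).
  move=> w w' ag; rewrite /SK /= !traj_run (@run_agree _ _ _ (fun i => sig i w') (fun i => sig i w)) //.
  move=> i /andP[i1 i2]; apply/esym/ag; rewrite i1 /=; by rewrite -ltnS -add1n.
have mS K : measurable (SK K) := det_meas (detS K).
have SF K : SK K `<=` Fail (K.-1 %/ L')%N.
  move=> w; rewrite /SK /= traj_run => h j jm G.
  have e : K.-1 = (j * L' + L' + (K.-1 - (j * L' + L')))%N.
    rewrite subnKC // -mulSnr (leq_trans _ (leq_trunc_div K.-1 L')) //.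
    by rewrite leq_mul2r jm orbT.
  have b1 := run_bounded A0 A1 (fun i => sig i w) 1%N (j * L')%N hx1.
  have [m' b2] := G _ _ _ b1.
  have b3 := run_bounded A0 A1 (fun i => sig i w) (1 + j * L' + L')%N (K.-1 - (j * L' + L'))%N b2.
  have d1 := disagreement_bound N0 b3.
  have eq : run A (fun i => sig i w) 1 K.-1 x1 = run A (fun i => sig i w) (1 + j * L' + L')
      (K.-1 - (j * L' + L')) (run A (fun i => sig i w) (1 + j * L') L'
      (run A (fun i => sig i w) 1 (j * L') x1)).
    by rewrite -run_add -run_add addnA -e.
  move: h; rewrite eq => d2; lra.
have bound K : pr (SK K) <= (1 - be) ^+ (K.-1 %/ L')%N.
  apply: (le_trans _ (Fbound (K.-1 %/ L')%N)); apply: pr_le; [exact: mS | exact: (det_meas (detF _)) | exact: SF].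
apply: cvg_EFin.
  near=> K; rewrite fin_num_measure //; exact: mS.
have c0 : 0 <= 1 - be by rewrite subr_ge0.
have c1 : 1 - be < 1 by lra.
have := @cvg_expr R (1 - be); rewrite ger0_norm // => /(_ c1) /cvgrPdist_lt H.
apply/cvgrPdist_lt => e e0; have := H e e0.
move=> [n0 _ Hn]; exists (n0 * L').+1 => // K /= hK.
have : (n0 <= K.-1 %/ L')%N.
  rewrite leq_divRL // -ltnS (leq_trans hK) //.
  by case: K hK.
move=> /Hn /=; rewrite !sub0r !normrN ger0_norm; last exact: exprn_ge0.
rewrite ger0_norm; last exact: (pr_ge0 P (mS K)).
exact: le_lt_trans (bound K).
Unshelve. all: by end_near.
Qed.
End Hist.

Unset Implicit Arguments.

Theorem corollary1 (R : realType) (N : nat) (A : 'M[R]_N)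
  (d : measure_display) (T : measurableType d) (P : probability T R)
  (sig : nat -> T -> {set 'I_N}) :
  (0 < N)%N ->
  row_stochastic A ->
  (forall k s, measurable [set w | sig k w = s]) ->
  (* (a) *)
  (rooted A /\ exists r, is_root A r /\ 0 < A r r) ->
  (* (b) *)
  (exists alpha : R, 0 < alpha /\
     forall (k : nat) (h : nat -> {set 'I_N}) (s : {set 'I_N}), (0 < k)%N ->
       P (hist_event sig k h) != 0%E ->
       cprob P [set w | sig k w = s] (hist_event sig k h) != 0 ->
       alpha <= cprob P [set w | sig k w = s] (hist_event sig k h)) ->
  (* (c) *)
  (exists q : nat, (0 < q)%N /\
     forall (k : nat) (h : nat -> {set 'I_N}), (0 < k)%N ->
       P (hist_event sig k h) != 0%E ->
       forall v : 'I_N, exists w : nat, (w < q)%N /\ exists s : {set 'I_N},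
         v \in s /\ cprob P [set t | sig (k + w)%N t = s] (hist_event sig k h) != 0) ->
  (* consensus almost surely *)
  forall (eps : R) (x1 : 'cV[R]_N), 0 < eps ->
    (fun k : nat => P [set w | eps <= disagreement (traj A sig x1 k.-1 w)])
      @ \oo --> 0%E.
Proof.
move=> N0 [A0 A1] msig [_ [r [rroot rr]]] [alpha [al0 hb0]] [q [q0 hc0]] eps x1 eps0.
have A_le1 i j : A i j <= 1.
  have := A1 i; rewrite (bigD1 j) //= => h.
  have : 0 <= \sum_(l < N | l != j) A i l by apply: sumr_ge0 => l _.
  lra.
pose a := \prod_(ij : 'I_N * 'I_N | 0 < A ij.1 ij.2) A ij.1 ij.2.
have a0 : 0 < a by apply: prodr_gt0 => ij.
have amin i j : 0 < A i j -> a <= A i j.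
  move=> Aij; rewrite /a (bigD1 (i, j)) //= -[leRHS]mulr1; apply: ler_wpM2l.
    exact: ltW.
  by apply: prodr_ile1 => ij /andP[h _]; rewrite (ltW h) A_le1.
have a1 : a <= 1 by apply: le_trans (amin _ _ rr) (A_le1 _ _).
have mE k g : measurable (hist_event sig k g) by apply: E_meas.
have hb : forall k g s, (0 < k)%N -> 0 < pr P (hist_event sig k g) ->
    0 < pr P (hist_event sig k.+1 (upd g k s)) ->
    alpha * pr P (hist_event sig k g) <= pr P (hist_event sig k.+1 (upd g k s)).
  move=> k g s k0 p p'.
  have eqc : cprob P [set w | sig k w = s] (hist_event sig k g) =
      pr P (hist_event sig k.+1 (upd g k s)) / pr P (hist_event sig k g).
    by rewrite /cprob E_upd // setIC.
  have := hb0 k g s k0; rewrite P_neq0 // eqc -ler_pdivlMr //; apply.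
    exact: lt0r_neq0.
  by apply: mulf_neq0; [exact: lt0r_neq0 | rewrite invr_neq0 // lt0r_neq0].
have hc : forall k g, (0 < k)%N -> 0 < pr P (hist_event sig k g) -> forall v : 'I_N,
    exists w, (w < q)%N /\ exists s : {set 'I_N}, v \in s /\
      0 < pr P ([set t | sig (k + w)%N t = s] `&` hist_event sig k g).
  move=> k g k0 p v.
  have pn : P (hist_event sig k g) != 0%E by rewrite P_neq0 // lt0r_neq0.
  have [w [wq [s [vs h]]]] := hc0 k g k0 pn v.
  exists w; split => //; exists s; split => //.
  rewrite lt0r pr_ge0 ?andbT; last by apply: measurableI.
  by apply: contra h; rewrite /cprob => /eqP h; rewrite [fine _]h mul0r.
exact: (mainlem msig al0 hb hc A0 A1 a0 a1 amin rr rroot N0 q0 x1 eps0).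
Qed.
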